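(* Let $\rho:\Gamma\to GL_d(\mathbb{C})$ be an irreducible representation of dimension $d\le4$, and assume the eigenvalues of $\rho(T)$ (with multiplicity) are $\mathbf{e}(r_1),\dots,\mathbf{e}(r_d)$ for real numbers $r_1,\dots,r_d$. Then $12(r_1+\cdots+r_d)$ is an integer divisible by $d$.
   Context: $\Gamma=SL(2,\mathbb{Z})$, $T=\begin{pmatrix}1&1\\0&1\end{pmatrix}$, $\mathbf{e}(r)=e^{2\pi ir}$. *)

(* Defs.v *)
From HB Require Import structures.
From mathcomp Require Import all_boot all_order all_algebra.
From mathcomp Require Import all_classical all_reals.
From mathcomp Require Import trigo.
From mathcomp Require Import complex.
Set Implicit Arguments. Unset Strict Implicit. Unset Printing Implicit Defensive.
Import Order.TTheory GRing.Theory Num.Theory.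
Local Open Scope ring_scope.

(* Gamma = SL(2,Z) as the set of 2x2 integer matrices of determinant 1. *)
Definition SL2Z (A : 'M[int]_2) : Prop := \det A = 1.

Definition Tmat : 'M[int]_2 := \matrix_(i < 2, j < 2) (if (i <= j)%N then 1 else 0).

Definition ee (R : realType) (r : R) : R[i] :=
  Complex (cos (2 * pi * r)) (sin (2 * pi * r)).

Definition is_rep (R : realType) (d : nat) (rho : 'M[int]_2 -> 'M[R[i]]_d) : Prop :=
  rho 1%:M = 1%:M /\
  (forall A B, SL2Z A -> SL2Z B -> rho (A *m B) = rho A *m rho B).

(* Irreducible: d > 0 and the only rho(Gamma)-stable subspaces of C^d
   (row spaces of matrices) are 0 and the whole space. *)
Definition irreducible_rep (R : realType) (d : nat) (rho : 'M[int]_2 -> 'M[R[i]]_d) : Prop :=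
  (0 < d)%N /\
  forall U : 'M[R[i]]_d,
    (forall A, SL2Z A -> stablemx U (rho A)) -> (U == 0) || row_full U.

(* Main.v *)
Require Import Defs.
From HB Require Import structures.
From mathcomp Require Import all_boot all_order all_algebra.
From mathcomp Require Import all_classical all_reals.
From mathcomp Require Import trigo.
From mathcomp Require Import complex.
From mathcomp Require Import ring lra zify.
Import Order.TTheory GRing.Theory Num.Theory.
Local Open Scope ring_scope.

Section T.
Variable R : realType.
Lemma eeD (a b : R) : ee a * ee b = ee (a + b).
Proof.
rewrite /ee [2 * pi * (a + b)]mulrDr cosD sinD.
rewrite [LHS]/=.
congr Complex; ring.
Qed.
Lemma ee0 : ee (0 : R) = 1.
Proof. by rewrite /ee mulr0 cos0 sin0. Qed.
Lemma ee1 : ee (1 : R) = 1.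
Proof. by rewrite /ee mulr1 mulr_natl cos2pi sin2pi. Qed.
Lemma eeN (a : R) : ee (- a) * ee a = 1.
Proof. by rewrite eeD addNr ee0. Qed.
Lemma ee_nat (n : nat) : ee (n%:R : R) = 1.
Proof.
elim: n => [|n IH]; first by rewrite ee0.
by rewrite -addn1 natrD -eeD IH ee1 mulr1.
Qed.
Lemma ee_int (k : int) : ee (k%:~R : R) = 1.
Proof.
case: k => n; first by rewrite ee_nat.
rewrite NegzE rmorphN /=.
have := eeN ((n.+1)%:~R : R).
by rewrite -pmulrn ee_nat mulr1.
Qed.
Lemma ee_eq1 (x : R) : ee x = 1 -> exists m : int, x = m%:~R.
Proof.
move=> H.
set y := x - (Num.floor x)%:~R.
have y0 : 0 <= y by rewrite subr_ge0 floor_le.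
have y1 : y < 1 by rewrite ltrBlDl -[1]/(1%:~R) -rmorphD floorD1_gt.
have Hy : ee y = 1.
  by rewrite /y -eeD H mul1r -rmorphN ee_int.
exists (Num.floor x).
suff : y = 0 by move/eqP; rewrite subr_eq0 => /eqP.
have Hc : forall z : R, ee z = 1 -> cos (2 * pi * z) = 1.
  by move=> z; rewrite /ee => -[].
have key : forall z : R, 0 < z <= 1/2 -> cos (2 * pi * z) < 1.
  move=> z /andP[z0 z1].
  have hp := @pi_gt0 R.
  rewrite -[X in _ < X]cos0; rewrite ltr_cos // ?in_itv /=.
  all: try (apply/andP; split).
  all: try nra.


case: (ltrgt0P y) => [yp|yn|->//]; last by exfalso; move: y0; rewrite leNgt yn.
exfalso.
case: (lerP y (1/2)) => yh.
  by have := key y; rewrite yp yh Hc // ltxx; move/(_ isT).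
have : cos (2 * pi * (1 - y)) < 1 by apply: key; apply/andP; split; lra.
rewrite Hc ?ltxx //.
by rewrite -eeD ee1 mul1r; have := eeN y; rewrite Hy mulr1.
Qed.
End T.

Definition M2 (a b c e : int) : 'M[int]_2 :=
  \matrix_(i < 2, j < 2) if (i : nat) == 0%N then (if (j : nat) == 0%N then a else b)
                          else (if (j : nat) == 0%N then c else e).

Lemma M2K (A : 'M[int]_2) : A = M2 (A 0 0) (A 0 1) (A 1 0) (A 1 1).
Proof.
apply/matrixP => i j; rewrite mxE.
case: i => [[|[|//]] Hi]; case: j => [[|[|//]] Hj] /=; congr (A _ _); exact: val_inj.
Qed.

Lemma M2_mul a b c e a' b' c' e' :
  M2 a b c e *m M2 a' b' c' e' =
  M2 (a * a' + b * c') (a * b' + b * e') (c * a' + e * c') (c * b' + e * e').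
Proof.
apply/matrixP => i j; rewrite !mxE !big_ord_recl big_ord0 !mxE /=.
case: i => [[|[|//]] Hi]; case: j => [[|[|//]] Hj] /=; rewrite addr0 //.
Qed.

Lemma M2_det a b c e : \det (M2 a b c e) = a * e - b * c.
Proof.
rewrite (expand_det_row _ 0) !big_ord_recl big_ord0 /cofactor !det_mx11 !mxE /=.
by rewrite /bump /=; ring.
Qed.

Lemma M2_eq a b c e a' b' c' e' :
  a = a' -> b = b' -> c = c' -> e = e' -> M2 a b c e = M2 a' b' c' e'.
Proof. by move=> -> -> -> ->. Qed.

Definition Sm : 'M[int]_2 := M2 0 (-1) 1 0.
Definition Tp (z : int) : 'M[int]_2 := M2 1 z 0 1.

Lemma TmatE : Tmat = Tp 1.
Proof. by apply/matrixP => i j; rewrite !mxE; case: i => [[|[|//]] Hi]; case: j => [[|[|//]] Hj]. Qed.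

Lemma SL2Z_M2 a b c e : SL2Z (M2 a b c e) <-> a * e - b * c = 1.
Proof. by rewrite /SL2Z M2_det. Qed.

Lemma SL2Z_mul A B : SL2Z A -> SL2Z B -> SL2Z (A *m B).
Proof. by rewrite /SL2Z det_mulmx => -> ->; rewrite mulr1. Qed.

Lemma SL2_gen (P : 'M[int]_2 -> Prop) :
  P Sm -> P Tmat -> P (Tp (-1)) ->
  (forall A B, SL2Z A -> SL2Z B -> P A -> P B -> P (A *m B)) ->
  forall A, SL2Z A -> P A.
Proof.
move=> PS PT PTi PM.
have SLT z : SL2Z (Tp z) by apply/SL2Z_M2; ring.
have SLS : SL2Z Sm by apply/SL2Z_M2; ring.
have SLTm : SL2Z Tmat by rewrite TmatE.
have PTn (n : nat) : P (Tp n.+1).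
  elim: n => [|n IH]; first by rewrite -TmatE.
  have -> : Tp (n.+2)%N = Tp n.+1 *m Tmat.
    by rewrite TmatE /Tp M2_mul; apply: M2_eq; rewrite ?natr1 /=; try ring; lia.
  by apply: (PM) => //; apply: SLT.
have PTm (n : nat) : P (Tp (- n.+1%:Z)).
  elim: n => [|n IH]; first by [].
  have -> : Tp (- (n.+2)%:Z) = Tp (- n.+1%:Z) *m Tp (-1).
    by rewrite /Tp M2_mul; apply: M2_eq; try ring; lia.
  by apply: (PM) => //; apply: SLT.
have PTz z : P (Tp z).
  case: z => [[|n]|n]; last by rewrite NegzE; exact: PTm.
    have -> : Tp 0 = Tmat *m Tp (-1).
      by rewrite TmatE /Tp M2_mul; apply: M2_eq; ring.
    by apply: (PM) => //; apply: SLT.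
  exact: PTn.
have PS2 : P (Sm *m Sm) by apply: (PM).
have PS3 : P (Sm *m Sm *m Sm) by apply: (PM) => //; try apply: SL2Z_mul.
have SLS3 : SL2Z (Sm *m Sm *m Sm) by apply: SL2Z_mul => //; apply: SL2Z_mul.
suff H : forall n (A : 'M[int]_2), (absz (A 1%R 0%R) < n)%N -> SL2Z A -> P A.
  by move=> A; apply: (H (absz (A 1%R 0%R)).+1).
elim=> [//|n IH] A; rewrite ltnS => Hn HA.
rewrite [A]M2K SL2Z_M2 in HA *.
have : (absz (A 1%R 0%R) <= n)%N by [].
move: HA; clear Hn.
move: (A 0 0) (A 0 1) (A 1 0) (A 1 1) => a b c e HA Hn'.
have [c0|cn0] := eqVneq c 0.
  rewrite c0 in HA *.
  have Hae : a * e = 1 by rewrite mulr0 subr0 in HA.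
  have : (absz a * absz e)%N = 1%N by rewrite -abszM Hae.
  move/eqP; rewrite muln_eq1 => /andP[/eqP Ha1 /eqP He1].
  have [[-> ->]|[-> ->]] : (a = 1 /\ e = 1) \/ (a = -1 /\ e = -1) by lia.
    by have := PTz b; rewrite /Tp.
  have -> : M2 (-1) b 0 (-1) = Sm *m Sm *m Tp (- b).
    by rewrite /Sm /Tp !M2_mul; apply: M2_eq; ring.
  by apply: (PM) => //; try apply: SL2Z_mul.
set q := (a %/ c)%Z; set r := (a %% c)%Z.
have Ha : a = q * c + r by apply: divz_eq.
have r0 : 0 <= r by apply: modz_ge0.
have rc : r < `|c|%:Z by apply: ltz_mod.
have -> : M2 a b c e = Tp q *m (Sm *m Sm *m Sm *m M2 (- c) (- e) r (b - q * e)).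
  rewrite /Sm /Tp !M2_mul; apply: M2_eq; rewrite ?Ha; ring.
have SLB : SL2Z (M2 (- c) (- e) r (b - q * e)) by apply/SL2Z_M2; rewrite Ha in HA; lia.
apply: (PM) => //; first by apply: SL2Z_mul.
apply: (PM) => //.
apply: IH => //=.
rewrite /M2 mxE /=.
lia.
Qed.

Section LinAlg.
Variable F : fieldType.

Lemma diag_exists n (A : 'M[F]_n.+1) (rs : seq F) :
  uniq rs -> horner_mx A (\prod_(x <- rs) ('X - x%:P)) = 0 ->
  exists P : 'M[F]_n.+1, exists D : 'rV[F]_n.+1,
    P \in unitmx /\ P *m A = diag_mx D *m P.
Proof.
move=> urs H.
have [|P Pu HP] := (proj2 (diagonalizableP A)).
  by exists rs => //; apply: mxminpoly_min.
have [D HD] := diagonalizable_forPex HP.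
by exists P, D; split => //; apply/(simmxP Pu).
Qed.

Lemma row_free_rowsub1 n k (f : 'I_k -> 'I_n) :
  injective f -> row_free (rowsub f (1%:M : 'M[F]_n)).
Proof.
move=> finj; apply/row_freeP; exists (rowsub f (1%:M : 'M[F]_n))^T.
rewrite mul_rowsub_mx mul1mx; apply/matrixP => i j; rewrite !mxE (inj_eq finj) eq_sym.
by [].
Qed.

Lemma eig_count n (A P : 'M[F]_n) (D : 'rV[F]_n) k (f : 'I_k -> 'I_n) c :
  P \in unitmx -> P *m A = diag_mx D *m P -> injective f ->
  (forall j, D 0 (f j) = c) -> (k <= \rank (eigenspace A c))%N.
Proof.
move=> Pu HPA finj HD.
have sub : (rowsub f P <= eigenspace A c)%MS.
  apply/eigenspaceP; rewrite mul_rowsub_mx HPA mul_diag_mx.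
  by apply/matrixP => i j; rewrite !mxE HD.
have <- : \rank (rowsub f P) = k.
  rewrite rowsubE mxrankMfree ?row_free_unit //.
  by apply/eqP; apply: row_free_rowsub1.
exact: mxrankS.
Qed.

Lemma eig_pow n (A P : 'M[F]_n.+1) (D : 'rV[F]_n.+1) m e i :
  P \in unitmx -> P *m A = diag_mx D *m P -> A ^+ m = e%:M -> D 0 i ^+ m = e.
Proof.
move=> Pu HPA HA.
set v := row i P.
have Hv : v *m A = D 0 i *: v.
  by rewrite /v -row_mul HPA mul_diag_mx; apply/rowP => j; rewrite !mxE.
have Hvm : forall k, v *m A ^+ k = D 0 i ^+ k *: v.
  elim=> [|k IH]; first by rewrite expr0 mulmx1 expr0 scale1r.
  by rewrite exprS -mulmxE mulmxA Hv -scalemxAl IH scalerA -exprS.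
have vn0 : v != 0.
  apply/negP => /eqP v0.
  have : v *m invmx P = row i 1%:M by rewrite /v -row_mul mulmxV.
  rewrite v0 mul0mx => /rowP /(_ i); rewrite !mxE eqxx /=.
  by move/eqP; rewrite eq_sym oner_eq0.
have := Hvm m; rewrite HA mul_mx_scalar => /eqP.
rewrite -subr_eq0 -scalerBl scaler_eq0 (negPf vn0) orbF subr_eq0.
by move/eqP.
Qed.

Lemma cap_nonzero n (U V : 'M[F]_n) : (n < \rank U + \rank V)%N -> (U :&: V)%MS != 0.
Proof.
move=> H; rewrite -mxrank_eq0; apply/eqP => H0.
have := mxrank_sum_cap U V; rewrite H0 addn0 => E.
by move: (rank_leq_col (U + V)%MS); rewrite E leqNgt H.
Qed.

Lemma eig_stable n (W A : 'M[F]_n) a : (W <= eigenspace A a)%MS -> stablemx W A.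
Proof. by move/eigenspaceP => HW; rewrite HW scalemx_sub. Qed.

Lemma eig_pair n (A P : 'M[F]_n) (D : 'rV[F]_n) (i j : 'I_n) c :
  P \in unitmx -> P *m A = diag_mx D *m P -> i != j ->
  D 0 i = c -> D 0 j = c -> (2 <= \rank (eigenspace A c))%N.
Proof.
move=> Pu HPA ij Di Dj.
apply: (@eig_count _ _ P D 2 (fun k : 'I_2 => if val k == 0%N then i else j)) => //.
  move=> [[|[|//]] Hk] [[|[|//]] Hl] //= E; try by apply: val_inj.
  - by rewrite E eqxx in ij.
  - by rewrite E eqxx in ij.
by move=> [[|[|//]] Hk].
Qed.

Lemma eig_triple n (A P : 'M[F]_n) (D : 'rV[F]_n) (i j l : 'I_n) c :
  P \in unitmx -> P *m A = diag_mx D *m P -> i != j -> i != l -> j != l ->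
  D 0 i = c -> D 0 j = c -> D 0 l = c -> (3 <= \rank (eigenspace A c))%N.
Proof.
move=> Pu HPA ij il jl Di Dj Dl.
apply: (@eig_count _ _ P D 3
  (fun k : 'I_3 => if val k == 0%N then i else if val k == 1%N then j else l)) => //.
  move=> [[|[|[|//]]] Hk] [[|[|[|//]]] Hl] //= E; try by apply: val_inj.
  all: try first [by rewrite E eqxx in ij | by rewrite E eqxx in il | by rewrite E eqxx in jl | by rewrite -E eqxx in ij | by rewrite -E eqxx in il | by rewrite -E eqxx in jl].
by move=> [[|[|[|//]]] Hk].
Qed.

Lemma sq_cases (e x y : F) : x ^+ 2 = e -> y ^+ 2 = e -> y = x \/ y = - x.
Proof.
move=> hx hy.
have : (y - x) * (y + x) = 0 by rewrite -subr_sqr hx hy subrr.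
move/eqP; rewrite mulf_eq0 => /orP[/eqP|/eqP] H.
  by left; apply/eqP; rewrite -subr_eq0 H.
by right; apply/eqP; rewrite -subr_eq0 opprK H.
Qed.

Lemma cube_pair (e x y : F) : x ^+ 3 = e -> y ^+ 3 = e -> x != y ->
  x ^+ 2 + x * y + y ^+ 2 = 0.
Proof.
move=> hx hy xy.
have : (x - y) * (x ^+ 2 + x * y + y ^+ 2) = 0.
  have -> : (x - y) * (x ^+ 2 + x * y + y ^+ 2) = x ^+ 3 - y ^+ 3 by ring.
  by rewrite hx hy subrr.
move/eqP; rewrite mulf_eq0 subr_eq0 (negPf xy) /=; exact/eqP.
Qed.

Lemma cube_sum3 (e x y z : F) : x ^+ 3 = e -> y ^+ 3 = e -> z ^+ 3 = e ->
  x != y -> x != z -> y != z -> x + y + z = 0.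
Proof.
move=> hx hy hz xy xz yz.
have h1 := @cube_pair e x y hx hy xy; have h2 := @cube_pair e x z hx hz xz.
have : (y - z) * (x + y + z) = 0.
  have -> : (y - z) * (x + y + z) = (x ^+ 2 + x * y + y ^+ 2) - (x ^+ 2 + x * z + z ^+ 2) by ring.
  by rewrite h1 h2 subrr.
move/eqP; rewrite mulf_eq0 subr_eq0 (negPf yz) /=; exact/eqP.
Qed.

Lemma cube_prod3 (e x y z : F) : x ^+ 3 = e -> y ^+ 3 = e -> z ^+ 3 = e ->
  x != y -> x != z -> y != z -> x * y * z = e.
Proof.
move=> hx hy hz xy xz yz.
have h1 := @cube_pair e x y hx hy xy; have h3 := @cube_sum3 e x y z hx hy hz xy xz yz.
have : x * y * z - x ^+ 3 = - x * (x ^+ 2 + x * y + y ^+ 2) + x * y * (x + y + z) by ring.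
by rewrite h1 h3 mulr0 mulr0 addr0 hx => /eqP; rewrite subr_eq0 => /eqP.
Qed.

Lemma det_diag_sim n (A P : 'M[F]_n) (D : 'rV[F]_n) :
  P \in unitmx -> P *m A = diag_mx D *m P -> \det A = \prod_i D 0 i.
Proof.
move=> Pu HPA.
have := congr1 determinant HPA; rewrite !det_mulmx det_diag [\det P * _]mulrC.
have HP : \det P != 0 by rewrite -unitfE -unitmxE.
exact: (mulIf HP).
Qed.

End LinAlg.

Section Poly.
Variable F : fieldType.

Lemma horner2 n (A : 'M[F]_n.+1) l :
  A ^+ 2 = (l ^+ 2)%:M -> horner_mx A (\prod_(x <- [:: l; - l]) ('X - x%:P)) = 0.
Proof.
move=> HA.
have -> : \prod_(x <- [:: l; - l]) ('X - x%:P) = 'X ^+ 2 - (l ^+ 2)%:P.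
  rewrite !big_cons big_nil mulr1 polyCN rmorphXn /=; ring.
by rewrite rmorphB rmorphXn /= horner_mx_X horner_mx_C HA subrr.
Qed.

Lemma horner3 n (A : 'M[F]_n.+1) a b c e :
  a + b + c = 0 -> a * b + b * c + c * a = 0 -> a * b * c = e ->
  A ^+ 3 = e%:M -> horner_mx A (\prod_(x <- [:: a; b; c]) ('X - x%:P)) = 0.
Proof.
move=> h1 h2 h3 HA.
have -> : \prod_(x <- [:: a; b; c]) ('X - x%:P) =
   'X ^+ 3 - (a + b + c)%:P * 'X ^+ 2 + (a * b + b * c + c * a)%:P * 'X - (a * b * c)%:P.
  rewrite !big_cons big_nil mulr1 !rmorphD !rmorphM /=; ring.
rewrite h1 h2 h3 !polyC0 !mul0r subr0 addr0.
by rewrite rmorphB rmorphXn /= horner_mx_X horner_mx_C HA subrr.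
Qed.
End Poly.

Lemma omega_ex (R : rcfType) : exists w : R[i], w ^+ 2 + w + 1 = 0.
Proof.
exists (Complex (-1/2) (Num.sqrt 3 / 2)).
have h3 : Num.sqrt (3 : R) ^+ 2 = 3 by rewrite sqr_sqrtr // ler0n.
rewrite expr2 /=.
apply/eqP; rewrite eq_complex /=; apply/andP; split; apply/eqP.
  move: h3; move: (Num.sqrt (3:R)) => s h3.
  have -> : -1/2 * (-1/2) - s/2 * (s/2) + -1/2 + 1 = (3 - s^+2)/4 :> R by field.
  by rewrite h3 subrr mul0r.
by field.
Qed.

Lemma i_ex (R : rcfType) : exists l : R[i], l ^+ 2 = -1.
Proof.
exists (Complex 0 1).
rewrite expr2 /=. apply/eqP; rewrite eq_complex /=; apply/andP; split; apply/eqP; ring.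
Qed.

Definition mI : 'M[int]_2 := M2 (-1) 0 0 (-1).
Definition Rm : 'M[int]_2 := M2 0 (-1) 1 1.

Lemma M2_one : 1%:M = M2 1 0 0 1 :> 'M[int]_2.
Proof. by apply/matrixP => i j; rewrite !mxE; case: i => [[|[|//]] Hi]; case: j => [[|[|//]] Hj]. Qed.

Lemma SS : Sm *m Sm = mI.
Proof. by rewrite /Sm M2_mul; apply: M2_eq; ring. Qed.
Lemma RRR : Rm *m Rm *m Rm = mI.
Proof. by rewrite /Rm !M2_mul; apply: M2_eq; ring. Qed.
Lemma mImI : mI *m mI = 1%:M.
Proof. by rewrite /mI M2_mul M2_one; apply: M2_eq; ring. Qed.
Lemma T_SR : Tmat = Sm *m Sm *m Sm *m Rm.
Proof. by rewrite TmatE /Tp /Sm /Rm !M2_mul; apply: M2_eq; ring. Qed.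
Lemma Ti_SR : Tp (-1) = Rm *m Rm *m Rm *m Rm *m Rm *m Sm.
Proof. by rewrite /Tp /Sm /Rm !M2_mul; apply: M2_eq; ring. Qed.
Lemma mI_comm A : mI *m A = A *m mI.
Proof. by rewrite [A]M2K /mI !M2_mul; apply: M2_eq; ring. Qed.
Lemma SL_S : SL2Z Sm. Proof. by apply/SL2Z_M2; ring. Qed.
Lemma SL_R : SL2Z Rm. Proof. by apply/SL2Z_M2; ring. Qed.
Lemma SL_mI : SL2Z mI. Proof. by apply/SL2Z_M2; ring. Qed.

Section Rep.
Variable R : realType.
Variable d : nat.
Variable rho : 'M[int]_2 -> 'M[R[i]]_d.
Hypothesis Hrep : is_rep rho.
Hypothesis Hirr : irreducible_rep rho.

Let rhoM A B : SL2Z A -> SL2Z B -> rho (A *m B) = rho A *m rho B.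
Proof. exact: Hrep.2. Qed.

Let s := rho Sm.
Let t := rho Rm.
Let N := rho mI.

Lemma ss : s *m s = N.
Proof. by rewrite /s /N -SS rhoM //; apply: SL_S. Qed.
Lemma ttt : t *m t *m t = N.
Proof.
by rewrite /t /N -RRR !rhoM //; try apply: SL2Z_mul; try apply: SL_R.
Qed.
Lemma NN : N *m N = 1%:M.
Proof. by rewrite /N -rhoM ?mImI ?Hrep.1 //; apply: SL_mI. Qed.
Lemma rhoT : rho Tmat = s *m s *m s *m t.
Proof.
rewrite T_SR !rhoM //; repeat apply: SL2Z_mul; (apply: SL_S || apply: SL_R).
Qed.

Lemma irr_SR (U : 'M[R[i]]_d) :
  stablemx U s -> stablemx U t -> (U == 0) || row_full U.
Proof.
move=> Hs Ht; apply: Hirr.2.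
have SLx := SL2Z_mul.
apply: SL2_gen => //.
- rewrite T_SR !rhoM //; try (repeat apply: SL2Z_mul); try apply: SL_S; try apply: SL_R.
  by repeat apply: stablemxM.
- rewrite Ti_SR !rhoM //; try (repeat apply: SL2Z_mul); try apply: SL_S; try apply: SL_R.
  by repeat apply: stablemxM.
- by move=> A B HA HB SA SB; rewrite rhoM //; apply: stablemxM.
Qed.

Lemma eps_ex : exists e : R[i], (e = 1 \/ e = -1) /\ N = e%:M.
Proof.
have comm A : SL2Z A -> comm_mx N (rho A).
  by move=> SA; rewrite /comm_mx /N -!rhoM ?mI_comm //; apply: SL_mI.
have := Hirr.2 (eigenspace N 1) (fun A SA => comm_mx_stable_eigenspace 1 (comm A SA)).
case/orP => [H0|Hf].
- exists (-1); split; first by right.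
  rewrite kermx_eq0 row_free_unit in H0.
  have E : (N - 1%:M) *m (N + 1%:M) = 0.
    by rewrite mulmxBl !mulmxDr NN !mulmx1 mul1mx [1%:M + N]addrC subrr.
  have : N + 1%:M = 0 by rewrite -(mulKmx H0 (N + 1%:M)) E mulmx0.
  move/eqP; rewrite addr_eq0 => /eqP ->.
  by rewrite raddfN.
- exists 1; split; first by left.
  rewrite -sub1mx in Hf.
  by move/eigenspaceP: Hf; rewrite mul1mx scale1r.
Qed.

Lemma no_common a b : (1 < d)%N ->
  (d < \rank (eigenspace s a) + \rank (eigenspace t b))%N -> False.
Proof.
move=> d1 Hr.
have Hc := @cap_nonzero _ _ _ _ Hr.
set U := (eigenspace s a :&: eigenspace t b)%MS in Hc.
have U1 : (U <= eigenspace s a)%MS by apply: capmxSl.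
have U2 : (U <= eigenspace t b)%MS by apply: capmxSr.
have := irr_SR _ (@eig_stable _ _ _ _ _ U1) (@eig_stable _ _ _ _ _ U2).
rewrite (negPf Hc) /= -sub1mx => HU.
have /eigenspaceP := submx_trans HU U1; rewrite mul1mx scalemx1 => Es.
have /eigenspaceP := submx_trans HU U2; rewrite mul1mx scalemx1 => Et.
have i0 : 'I_d by apply: (Ordinal (ltnW d1)).
have := irr_SR (delta_mx i0 i0).
rewrite Es Et !stablemxC => /(_ isT isT) /orP[|].
  move/eqP/matrixP => /(_ i0 i0); rewrite !mxE !eqxx /=.
  by move/eqP; rewrite oner_eq0.
rewrite /row_full mxrank_delta => /eqP d1'.
by rewrite -d1' in d1.
Qed.

Lemma dets e : N = e%:M -> (\det s) ^+ 2 = e ^+ d /\ (\det t) ^+ 3 = e ^+ d.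
Proof.
move=> HN; split.
  by rewrite expr2 -det_mulmx ss HN det_scalar.
by rewrite !exprS expr0 mulr1 mulrA -!det_mulmx ttt HN det_scalar.
Qed.

Lemma finish (r : 'I_d -> R) (k : nat) : (d * k = 12)%N ->
  char_poly (rho Tmat) = \prod_(j < d) ('X - (ee (r j))%:P) ->
  ((\det s) ^+ 3 * \det t) ^+ k = 1 ->
  exists m : int, 12 * (\sum_(j < d) r j) = m%:~R /\ (d%:Z %| m)%Z.
Proof.
move=> dk Hc Hz.
have Hdet : \det (rho Tmat) = \prod_(j < d) ee (r j).
  have := char_poly_det (rho Tmat); rewrite Hc -horner_coef0 horner_prod.
  under eq_bigr do rewrite hornerXsubC sub0r.
  rewrite prodrN card_ord => H.
  have Hx : (-1 : R[i]) ^+ d != 0 by rewrite expf_neq0 // oppr_eq0 oner_eq0.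
  exact: (mulfI Hx (esym H)).
have Hprod : \prod_(j < d) ee (r j) = ee (\sum_(j < d) r j).
  elim/big_rec2: _ => [|j y1 y2 _ ->]; first by rewrite ee0.
  by rewrite eeD.
have Hpow : forall (x : R) n, ee x ^+ n = ee (n%:R * x).
  move=> x; elim=> [|n IH]; first by rewrite expr0 mul0r ee0.
  by rewrite exprS IH eeD -[in RHS](add1n n) natrD mulrDl mul1r.
have HT : \det (rho Tmat) = (\det s) ^+ 3 * \det t.
  rewrite rhoT !det_mulmx; ring.
move: Hz; rewrite -HT Hdet Hprod Hpow => /ee_eq1 [m' Hm'].
exists (d%:Z * m'); split; last by apply: dvdz_mulr; apply: dvdzz.
rewrite rmorphM /= -Hm' mulrA -natrM dk.
by [].
Qed.

End Rep.

Lemma e_cases (R : realType) (e : R[i]) : e ^+ 2 = 1 -> e = 1 \/ e = -1.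
Proof. by move=> e2; apply: (@sq_cases _ 1 1 e) => //; rewrite expr1n. Qed.

Lemma sqrt_ex (R : realType) (e : R[i]) : e ^+ 2 = 1 -> exists l, l ^+ 2 = e.
Proof.
move/e_cases => [->|->]; first by exists 1; rewrite expr1n.
exact: i_ex.
Qed.

Lemma e_neq0 (R : realType) (e : R[i]) : e ^+ 2 = 1 -> e != 0.
Proof.
by move=> e2; apply/eqP => e0; move: e2; rewrite e0 expr0n /= => /eqP; rewrite eq_sym oner_eq0.
Qed.

Lemma diagS (R : realType) n (s : 'M[R[i]]_n.+1) e : e ^+ 2 = 1 -> s ^+ 2 = e%:M ->
  exists P, exists D : 'rV_n.+1, [/\ P \in unitmx, P *m s = diag_mx D *m P &
     forall i, D 0 i ^+ 2 = e].
Proof.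
move=> e2 hs.
have [l hl] := @sqrt_ex _ _ e2.
have l0 : l != 0.
  by apply/eqP => l0; have := @e_neq0 _ _ e2; rewrite -hl l0 expr0n eqxx.
have ul : uniq [:: l; - l].
  rewrite /= inE andbT; apply/negP => /eqP H.
  have : l *+ 2 = 0 by rewrite mulr2n {1}H addNr.
  by move/eqP; rewrite mulrn_eq0 (negPf l0).
have hs' : s ^+ 2 = (l ^+ 2)%:M by rewrite hl.
have [P [D [Pu HP]]] := @diag_exists _ _ _ _ ul (@horner2 _ _ s l hs').
exists P, D; split => // i.
exact: (@eig_pow _ _ _ _ _ _ _ i Pu HP hs).
Qed.

Lemma diagR (R : realType) n (t : 'M[R[i]]_n.+1) e : e ^+ 2 = 1 -> t ^+ 3 = e%:M ->
  exists P, exists D : 'rV_n.+1, [/\ P \in unitmx, P *m t = diag_mx D *m P &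
     forall i, D 0 i ^+ 3 = e].
Proof.
move=> e2 ht.
have e0 := @e_neq0 _ _ e2.
have [w hw] := omega_ex R.
have w3 : w ^+ 3 = 1.
  have : (w - 1) * (w ^+ 2 + w + 1) = w ^+ 3 - 1 by ring.
  by rewrite hw mulr0 => /esym /eqP; rewrite subr_eq0 => /eqP.
have n3 : (3 : R[i]) != 0 by rewrite pnatr_eq0.
have w1 : w != 1.
  apply/eqP => w1; move/eqP: n3; apply; rewrite -[RHS]hw w1; ring.
have w21 : w ^+ 2 != 1.
  apply/eqP => w21.
  have w2 : w = -2 by apply/eqP; rewrite -subr_eq0 -hw w21; apply/eqP; ring.
  move/eqP: n3; apply; rewrite -[RHS]hw w2; ring.
have ww2 : w != w ^+ 2.
  apply/eqP => ww2; move/eqP: w1; apply.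
  by rewrite -[RHS]w3 exprS -ww2 -expr2.
have ur : uniq [:: e; e * w; e * w ^+ 2].
  rewrite /= !inE negb_or andbT; apply/andP; split; first (apply/andP; split).
  - by apply/eqP; rewrite -{1}[e]mulr1 => /(mulfI e0) /esym /eqP; rewrite (negPf w1).
  - by apply/eqP; rewrite -{1}[e]mulr1 => /(mulfI e0) /esym /eqP; rewrite (negPf w21).
  - by apply/eqP => /(mulfI e0) /eqP; rewrite (negPf ww2).
have h1 : e + e * w + e * w ^+ 2 = 0.
  have -> : e + e * w + e * w ^+ 2 = e * (w ^+ 2 + w + 1) by ring.
  by rewrite hw mulr0.
have h2 : e * (e * w) + (e * w) * (e * w ^+ 2) + (e * w ^+ 2) * e = 0.
  have -> : e * (e * w) + (e * w) * (e * w ^+ 2) + (e * w ^+ 2) * e = e ^+ 2 * w * (w ^+ 2 + w + 1) by ring.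
  by rewrite hw mulr0.
have h3 : e * (e * w) * (e * w ^+ 2) = e.
  have -> : e * (e * w) * (e * w ^+ 2) = e ^+ 2 * e * w ^+ 3 by ring.
  by rewrite e2 w3 mul1r mulr1.
have [P [D [Pu HP]]] := @diag_exists _ _ _ _ ur (@horner3 _ _ _ _ _ _ _ h1 h2 h3 ht).
exists P, D; split => // i.
exact: (@eig_pow _ _ _ _ _ _ _ i Pu HP ht).
Qed.

Lemma case3 (R : realType) (rho : 'M[int]_2 -> 'M[R[i]]_3) e :
  is_rep rho -> irreducible_rep rho -> rho mI = e%:M -> e ^+ 2 = 1 ->
  \det (rho Rm) = e.
Proof.
move=> Hrep Hirr HN e2.
have s2 : rho Sm ^+ 2 = e%:M by rewrite expr2 -mulmxE (ss _ _ _ Hrep) HN.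
have t3 : rho Rm ^+ 3 = e%:M.
  by rewrite !exprS expr0 mulr1 -!mulmxE mulmxA (ttt _ _ _ Hrep) HN.
have [Ps [Ds [Psu HPs hx]]] := @diagS _ _ _ _ e2 s2.
have [Pt [Dt [Ptu HPt hy]]] := @diagR _ _ _ _ e2 t3.
rewrite (@det_diag_sim _ _ _ _ _ Ptu HPt).
rewrite !big_ord_recl big_ord0 mulr1 mulrA.
set i0 : 'I_3 := ord0; set i1 : 'I_3 := lift ord0 ord0; set i2 : 'I_3 := lift ord0 (lift ord0 ord0).
have n01 : i0 != i1 by []. have n02 : i0 != i2 by []. have n12 : i1 != i2 by [].
have [i [j [c [ij [Hi Hj]]]]] : exists i j c, i != j /\ Ds 0 i = c /\ Ds 0 j = c.
  case: (@sq_cases _ _ _ _ (hx i0) (hx i1)) => h1; first by exists i0, i1, (Ds 0 i0).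
  case: (@sq_cases _ _ _ _ (hx i0) (hx i2)) => h2; first by exists i0, i2, (Ds 0 i0).
  by exists i1, i2, (Ds 0 i1); rewrite h1 h2.
have rs := @eig_pair _ _ _ _ _ _ _ _ Psu HPs ij Hi Hj.
have contra : forall (a b : 'I_3), a != b -> Dt 0 a = Dt 0 b -> False.
  move=> a b ab E.
  have rt := @eig_pair _ _ _ _ _ a b (Dt 0 a) Ptu HPt ab erefl (esym E).
  exact: (@no_common _ _ _ Hrep Hirr c (Dt 0 a) isT (leq_add rs rt)).
have m01 : Dt 0 i0 != Dt 0 i1 by apply/eqP; apply: contra.
have m02 : Dt 0 i0 != Dt 0 i2 by apply/eqP; apply: contra.
have m12 : Dt 0 i1 != Dt 0 i2 by apply/eqP; apply: contra.
exact: (@cube_prod3 _ _ _ _ _ (hy i0) (hy i1) (hy i2) m01 m02 m12).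
Qed.

Lemma case4 (R : realType) (rho : 'M[int]_2 -> 'M[R[i]]_4) e :
  is_rep rho -> irreducible_rep rho -> rho mI = e%:M -> e ^+ 2 = 1 ->
  \det (rho Sm) = 1.
Proof.
move=> Hrep Hirr HN e2.
have s2 : rho Sm ^+ 2 = e%:M by rewrite expr2 -mulmxE (ss _ _ _ Hrep) HN.
have t3 : rho Rm ^+ 3 = e%:M.
  by rewrite !exprS expr0 mulr1 -!mulmxE mulmxA (ttt _ _ _ Hrep) HN.
have [Ps [Ds [Psu HPs hx]]] := @diagS _ _ _ _ e2 s2.
have [Pt [Dt [Ptu HPt hy]]] := @diagR _ _ _ _ e2 t3.
rewrite (@det_diag_sim _ _ _ _ _ Psu HPs).
rewrite !big_ord_recl big_ord0 mulr1 !mulrA.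
set i0 : 'I_4 := ord0; set i1 : 'I_4 := lift ord0 ord0;
set i2 : 'I_4 := lift ord0 (lift ord0 ord0);
set i3 : 'I_4 := lift ord0 (lift ord0 (lift ord0 ord0)).
have n01 : i0 != i1 by []. have n02 : i0 != i2 by []. have n03 : i0 != i3 by [].
have n12 : i1 != i2 by []. have n13 : i1 != i3 by []. have n23 : i2 != i3 by [].
have [i [j [c [ij [Hi Hj]]]]] : exists i j c, i != j /\ Dt 0 i = c /\ Dt 0 j = c.
  have [E|m01] := eqVneq (Dt 0 i0) (Dt 0 i1); first by exists i0, i1, (Dt 0 i0).
  have [E|m02] := eqVneq (Dt 0 i0) (Dt 0 i2); first by exists i0, i2, (Dt 0 i0).
  have [E|m03] := eqVneq (Dt 0 i0) (Dt 0 i3); first by exists i0, i3, (Dt 0 i0).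
  have [E|m12] := eqVneq (Dt 0 i1) (Dt 0 i2); first by exists i1, i2, (Dt 0 i1).
  have [E|m13] := eqVneq (Dt 0 i1) (Dt 0 i3); first by exists i1, i3, (Dt 0 i1).
  have [E|m23] := eqVneq (Dt 0 i2) (Dt 0 i3); first by exists i2, i3, (Dt 0 i2).
  exfalso.
  have S1 := @cube_sum3 _ _ _ _ _ (hy i0) (hy i1) (hy i2) m01 m02 m12.
  have S2 := @cube_sum3 _ _ _ _ _ (hy i0) (hy i1) (hy i3) m01 m03 m13.
  move/eqP: m23; apply; apply: (@addrI _ (Dt 0 i0 + Dt 0 i1)).
  by rewrite S1 S2.
have rt := @eig_pair _ _ _ _ _ _ _ _ Ptu HPt ij Hi Hj.
have contra : forall a b l : 'I_4, a != b -> a != l -> b != l ->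
    Ds 0 a = Ds 0 b -> Ds 0 a = Ds 0 l -> False.
  move=> a b l ab al bl E1 E2.
  have rs := @eig_triple _ _ _ _ _ a b l (Ds 0 a) Psu HPs ab al bl erefl (esym E1) (esym E2).
  exact: (@no_common _ _ _ Hrep Hirr (Ds 0 a) c isT (leq_add rs rt)).
have x4 : Ds 0 i0 ^+ 4 = 1.
  by rewrite (_ : Ds 0 i0 ^+ 4 = (Ds 0 i0 ^+ 2) ^+ 2); [rewrite hx e2 | ring].
case: (@sq_cases _ _ _ _ (hx i0) (hx i1)) => h1;
case: (@sq_cases _ _ _ _ (hx i0) (hx i2)) => h2;
case: (@sq_cases _ _ _ _ (hx i0) (hx i3)) => h3.
- by exfalso; apply: (contra i0 i1 i2).
- by exfalso; apply: (contra i0 i1 i2).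
- by exfalso; apply: (contra i0 i1 i3).
- by rewrite h1 h2 h3 -x4; ring.
- by exfalso; apply: (contra i0 i2 i3).
- by rewrite h1 h2 h3 -x4; ring.
- by rewrite h1 h2 h3 -x4; ring.
- by exfalso; apply: (contra i1 i2 i3) => //; rewrite h1 ?h2 ?h3.
Qed.

Theorem lemma4p1 (R : realType) (d : nat) (rho : 'M[int]_2 -> 'M[R[i]]_d)
  (r : 'I_d -> R) :
  is_rep rho -> irreducible_rep rho -> (d <= 4)%N ->
  char_poly (rho Tmat) = \prod_(k < d) ('X - (ee (r k))%:P) ->
  exists m : int, 12 * (\sum_(k < d) r k) = m%:~R /\ (d%:Z %| m)%Z.
Proof.
move=> Hrep Hirr d4 Hc.
have [e [He HN]] := @eps_ex _ _ _ Hrep Hirr.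
have e2 : e ^+ 2 = 1 by case: He => ->; ring.
have [hs ht] := @dets _ _ _ Hrep e HN.
case: d rho r Hrep Hirr d4 Hc HN hs ht => [|[|[|[|[|d]]]]] rho r Hrep Hirr d4 Hc HN hs ht //.
- by have := Hirr.1.
- apply: (@finish _ _ _ Hrep r 12) => //.
  rewrite (_ : (\det (rho Sm) ^+ 3 * \det (rho Rm)) ^+ 12 =
     (\det (rho Sm) ^+ 2) ^+ 18 * (\det (rho Rm) ^+ 3) ^+ 4); last by ring.
  by rewrite hs ht; case: He => ->; ring.
- apply: (@finish _ _ _ Hrep r 6) => //.
  rewrite (_ : (\det (rho Sm) ^+ 3 * \det (rho Rm)) ^+ 6 =
     (\det (rho Sm) ^+ 2) ^+ 9 * (\det (rho Rm) ^+ 3) ^+ 2); last by ring.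
  by rewrite hs ht; case: He => ->; ring.
- apply: (@finish _ _ _ Hrep r 4) => //.
  rewrite (_ : (\det (rho Sm) ^+ 3 * \det (rho Rm)) ^+ 4 =
     (\det (rho Sm) ^+ 2) ^+ 6 * (\det (rho Rm) ^+ 3) * \det (rho Rm)); last by ring.
  rewrite hs ht (@case3 _ _ _ Hrep Hirr HN e2).
  by case: He => ->; ring.
- apply: (@finish _ _ _ Hrep r 3) => //.
  rewrite (_ : (\det (rho Sm) ^+ 3 * \det (rho Rm)) ^+ 3 =
     (\det (rho Sm) ^+ 2) ^+ 4 * \det (rho Sm) * (\det (rho Rm) ^+ 3)); last by ring.
  rewrite hs ht (@case4 _ _ _ Hrep Hirr HN e2).
  by case: He => ->; ring.
Qed.
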